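(* Let $S=\mathbb{K}[x_1,\dots,x_n]$ and let $I\subseteq S$ be a monomial ideal which contains no variable, and let $s\geq 1$ be an integer. Assume that $I^s$ has linear quotients with respect to (the restriction to $G(I^s)$ of) a monomial order $<$ on $S$. Then there exists a linear order $\prec$ on $G(I)$ such that for any two monomials $u\prec v$ in $G(I)$ with $\gcd(u,v)=1$ there exists a monomial $w\in G(I)$ with $w\neq u,v$, $u\prec w$, and $\operatorname{supp}(w)\subseteq\operatorname{supp}(u)\cup\operatorname{supp}(v)$.
   Context: $G(I)$ denotes the set of minimal monomial generators of a monomial ideal $I$; $\operatorname{supp}(u)$ is the set of variables dividing a monomial $u$. A monomial order is a total order on monomials of $S$ which is multiplicative ($u<v\Rightarrow uw<vw$) and has $1$ as its least element. If $u_1\prec u_2\prec\dots\prec u_t$ is a linear order on $G(I)$, then $I$ has linear quotients with respect to this order if for every $2\leq i\leq t$ the colon ideal $(u_1,\dots,u_{i-1}):u_i$ is generated by a subset of the variables. *)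

(* Defs.v *)
(* Monomials of S = K[x_1..x_n] are exponent vectors. *)
From mathcomp Require Import all_boot.
Set Implicit Arguments. Unset Strict Implicit. Unset Printing Implicit Defensive.

Definition mon (n : nat) := {ffun 'I_n -> nat}.

Definition mone n : mon n := [ffun => 0%N].
Definition mmul n (u v : mon n) : mon n := [ffun i => u i + v i].
Definition mvar n (k : 'I_n) : mon n := [ffun i => nat_of_bool (i == k)].
Definition mprod n (s : seq (mon n)) : mon n := foldr (@mmul n) (mone n) s.

Definition mdiv n (u v : mon n) : bool := [forall i, u i <= v i].

Definition msupp n (u : mon n) : pred 'I_n := fun i => 0 < u i.

Definition mcoprime n (u v : mon n) : bool := [forall i, minn (u i) (v i) == 0].

(* A monomial ideal is described by its set of monomials.  The monomial
   ideal generated by a finite list of monomials: *)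
Definition mideal n (gens : seq (mon n)) : mon n -> Prop :=
  fun m => exists2 g, g \in gens & mdiv g m.

Definition mideal_pow n (gens : seq (mon n)) (s : nat) : mon n -> Prop :=
  fun m => exists gs : seq (mon n),
    [/\ size gs = s, all (mem gens) gs & mdiv (mprod gs) m].

Definition mingen n (J : mon n -> Prop) (u : mon n) : Prop :=
  J u /\ forall d, mdiv d u -> J d -> d = u.

Definition mlt n (le : rel (mon n)) (u v : mon n) : bool := le u v && (u != v).

Definition monomial_order n (le : rel (mon n)) : Prop :=
  [/\ reflexive le, antisymmetric le, transitive le & total le] /\
  (forall u v w, mlt le u v -> mlt le (mmul u w) (mmul v w)) /\
  (forall u, le (mone n) u).

(* J has linear quotients w.r.t. the restriction of le to G(J):
   for every u in G(J) that is not the first element, the colon ideal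
   (v : v in G(J), v < u) : u, whose monomials are the m with
   v | m*u for some such v, is generated by a subset V of the variables. *)
Definition linear_quotients n (J : mon n -> Prop) (le : rel (mon n)) : Prop :=
  forall u, mingen J u -> (exists v, mingen J v /\ mlt le v u) ->
    exists V : {set 'I_n}, forall m : mon n,
      (exists v, [/\ mingen J v, mlt le v u & mdiv v (mmul m u)]) <->
      (exists2 k, k \in V & mdiv (mvar k) m).

(* Main.v *)
Require Import Defs.
From mathcomp Require Import all_boot zify.
From Stdlib Require Import Classical.
Set Implicit Arguments. Unset Strict Implicit. Unset Printing Implicit Defensive.

Lemma mdivP n (a b : mon n) : reflect (forall i, a i <= b i) (mdiv a b).
Proof. exact: (iffP forallP). Qed.

Lemma mmulE n (a b : mon n) i : mmul a b i = a i + b i.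
Proof. by rewrite ffunE. Qed.

Lemma mmulC n (a b : mon n) : mmul a b = mmul b a.
Proof. by apply/ffunP=> i; rewrite !mmulE addnC. Qed.

Lemma mmulA n (a b c : mon n) : mmul a (mmul b c) = mmul (mmul a b) c.
Proof. by apply/ffunP=> i; rewrite !mmulE addnA. Qed.

Lemma mmul1 n (a : mon n) : mmul (mone n) a = a.
Proof. by apply/ffunP=> i; rewrite !mmulE ffunE. Qed.

Definition vpow n k (v : mon n) := mprod (nseq k v).

Lemma vpowS n k (v : mon n) : vpow k.+1 v = mmul v (vpow k v).
Proof. by []. Qed.

Lemma vpowE n k (v : mon n) i : vpow k v i = k * v i.
Proof. elim: k => [|k IH]; first by rewrite /vpow /= ffunE.
by rewrite vpowS mmulE IH mulSn. Qed.

Lemma mdiv_refl n (a : mon n) : mdiv a a.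
Proof. by apply/mdivP. Qed.

Lemma mdiv_trans n (a b c : mon n) : mdiv a b -> mdiv b c -> mdiv a c.
Proof. move=> /mdivP H1 /mdivP H2; apply/mdivP=> i; exact: leq_trans (H1 i) (H2 i). Qed.

Lemma mdiv_anti n (a b : mon n) : mdiv a b -> mdiv b a -> a = b.
Proof. move=> /mdivP H1 /mdivP H2; apply/ffunP=> i; apply/eqP; rewrite eqn_leq H1 H2. done. Qed.

Lemma mdiv_mul2 n (a b c d : mon n) : mdiv a b -> mdiv c d -> mdiv (mmul a c) (mmul b d).
Proof. move=> /mdivP H1 /mdivP H2; apply/mdivP=> i; rewrite !mmulE leq_add //. Qed.

Lemma mdiv1 n (a : mon n) : mdiv (mone n) a.
Proof. by apply/mdivP=> i; rewrite ffunE. Qed.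

Lemma vpow_mdiv n k (g v : mon n) : mdiv g v -> mdiv (vpow k g) (vpow k v).
Proof. move=> H; elim: k => [|k IH]; first exact: mdiv1.
by rewrite !vpowS mdiv_mul2. Qed.

Section Ord.
Variables (n : nat) (le : rel (mon n)).
Hypothesis ho : monomial_order le.

Lemma le_refl : reflexive le. Proof. by case: ho => [[]]. Qed.
Lemma le_anti : antisymmetric le. Proof. by case: ho => [[]]. Qed.
Lemma le_trans : transitive le. Proof. by case: ho => [[]]. Qed.
Lemma le_total : total le. Proof. by case: ho => [[]]. Qed.
Lemma mlt_mulr a b c : mlt le a b -> mlt le (mmul a c) (mmul b c).
Proof. by case: ho => _ [H _]; apply: H. Qed.
Lemma le_one a : le (mone n) a. Proof. by case: ho => _ [_ H]; apply: H. Qed.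

Lemma mlt_le a b : mlt le a b -> le a b. Proof. by case/andP. Qed.

Lemma le_mulr a b c : le a b -> le (mmul a c) (mmul b c).
Proof. move=> H; case: (eqVneq a b) => [->|ne]; first exact: le_refl.
by apply: mlt_le; apply: mlt_mulr; rewrite /mlt H ne. Qed.

Lemma le_mul2 a b c d : le a b -> le c d -> le (mmul a c) (mmul b d).
Proof. move=> H1 H2; apply: (le_trans (le_mulr c H1)).
by rewrite (mmulC b c) (mmulC b d); apply: le_mulr. Qed.

Lemma mdiv_le a b : mdiv a b -> le a b.
Proof. move=> /mdivP H.
have -> : b = mmul [ffun i => b i - a i] a.
  by apply/ffunP=> i; rewrite mmulE ffunE subnK.
by rewrite -{1}(mmul1 a); apply: le_mulr; apply: le_one. Qed.

Lemma mlt_le_trans a b c : mlt le a b -> le b c -> mlt le a c.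
Proof. case/andP=> H1 H2 H3; rewrite /mlt (le_trans H1 H3) /=.
apply/eqP=> E; subst c; move/eqP: H2; apply; apply: le_anti; rewrite H1 H3. done. Qed.

Lemma mlt_irr a : ~~ mlt le a a.
Proof. by rewrite /mlt eqxx andbF. Qed.
End Ord.
Lemma wt_lt n (d m : mon n) : mdiv d m -> d <> m -> \sum_i d i < \sum_i m i.
Proof.
move=> /mdivP H ne.
have [i Hi] : exists i, d i <> m i.
  apply: NNPP => Hn; apply: ne; apply/ffunP => i; apply: NNPP => Hi; apply: Hn; by exists i.
rewrite (bigD1 i) // [X in _ < X](bigD1 i) //=.
have : \sum_(j | j != i) d j <= \sum_(j | j != i) m j by apply: leq_sum => j _; apply: H.
move: (H i) => H1 H2; rewrite -addSn; apply: leq_add; [lia|exact: H2].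
Qed.

Lemma mingen_exists n (J : mon n -> Prop) m : J m -> exists d, mdiv d m /\ mingen J d.
Proof.
move: {2}(\sum_i m i) (leqnn (\sum_i m i)) => N.
elim: N m => [|N IH] m Hw Jm.
  exists m; split; first exact: mdiv_refl. split=> // d dm Jd.
  apply: NNPP => ne; have := wt_lt dm ne; lia.
case: (classic (mingen J m)) => Hm.
  by exists m; split; first exact: mdiv_refl.
have [d [dm [Jd ne]]] : exists d, mdiv d m /\ J d /\ d <> m.
  apply: NNPP => Hn; apply: Hm; split=> // d dm Jd; apply: NNPP => ne; apply: Hn; by exists d.
have := wt_lt dm ne => lt.
have [d' [d'd Hd']] := IH d (ltac:(lia)) Jd.
by exists d'; split=> //; apply: mdiv_trans d'd dm.
Qed.

Lemma mingen_pow n gens s (W : mon n) : mingen (mideal_pow gens s) W ->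
  exists ws, [/\ size ws = s, all (mem gens) ws & W = mprod ws].
Proof.
case=> [[gs [Hs Ha Hd]] Hm]; exists gs; split=> //.
by apply: esym; apply: Hm => //; exists gs; split=> //; apply: mdiv_refl.
Qed.

Lemma supp_div n (a b : mon n) (A : pred 'I_n) : mdiv a b ->
  (forall i, msupp b i -> A i) -> forall i, msupp a i -> A i.
Proof. move=> /mdivP H HA i; rewrite /msupp => Hi; apply: HA; rewrite /msupp; exact: leq_trans Hi (H i). Qed.

Lemma keyL n (le : rel (mon n)) gens (u v : mon n) (A : pred 'I_n) :
  monomial_order le -> mlt le v u ->
  (forall g, mingen (mideal gens) g -> (forall i, msupp g i -> A i) -> g != v -> le u g) ->
  forall gs, all (mem gens) gs -> (forall i, msupp (mprod gs) i -> A i) ->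
  mdiv (vpow (size gs) v) (mprod gs) \/
  (0 < size gs /\ le (mmul u (vpow (size gs).-1 v)) (mprod gs)).
Proof.
move=> ho vu H; elim=> [|h gs IH] /=; first by move=> _ _; left; apply: mdiv1.
case/andP=> hg Hall Hsupp.
have Hsh : forall i, msupp h i -> A i.
  by move=> i Hi; apply: Hsupp; rewrite /msupp mmulE; move: Hi; rewrite /msupp; lia.
have HsP : forall i, msupp (mprod gs) i -> A i.
  by move=> i Hi; apply: Hsupp; rewrite /msupp mmulE; move: Hi; rewrite /msupp; lia.
have [h' [h'h Hh']] : exists h', mdiv h' h /\ mingen (mideal gens) h'.
  by apply: mingen_exists; exists h => //; apply: mdiv_refl.
have Hsh' := supp_div h'h Hsh.
have vleu := mlt_le vu.
have Hcase : mdiv v h \/ le u h.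
  case: (eqVneq h' v) => [E|ne]; first by left; rewrite -E.
  by right; apply: le_trans ho _ _ _ (H _ Hh' Hsh' ne) (mdiv_le ho h'h).
have vleh : le v h.
  by case: Hcase => [/(mdiv_le ho)//|Hu]; apply: le_trans ho _ _ _ vleu Hu.
case: (IH Hall HsP) => [Hd|[k0 Hl]].
  case: Hcase => [Hv|Hu].
    by left; rewrite vpowS; apply: mdiv_mul2.
  right; split=> //=; apply: le_mul2 => //; exact: mdiv_le.
right; split=> //=.
move: Hl; case: (size gs) k0 => // k _ /= Hl.
rewrite vpowS mmulA (mmulC u v) -mmulA; exact: le_mul2.
Qed.
Lemma arith1 (a x b u c : nat) : a + x <= b + c -> u = 0 \/ a = 0 -> c <= u + x -> a <= b.
Proof. lia. Qed.
Lemma arith2 (a x u : nat) : a + x <= u + x -> u = 0 \/ a = 0 -> a = 0.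
Proof. lia. Qed.

Lemma mainL n gens s (le : rel (mon n)) (u v : mon n) :
  (forall k : 'I_n, ~ mideal gens (mvar k)) -> 1 <= s -> monomial_order le ->
  linear_quotients (mideal_pow gens s) le ->
  mingen (mideal gens) u -> mingen (mideal gens) v -> mlt le v u -> mcoprime u v ->
  exists w, [/\ mingen (mideal gens) w, mlt le w u, w != v &
               forall i, msupp w i -> msupp u i || msupp v i].
Proof.
move=> Hnv Hs ho LQ Hu Hv vu Hcop.
apply: NNPP => Hno.
pose A := fun i => msupp u i || msupp v i.
have H : forall g, mingen (mideal gens) g -> (forall i, msupp g i -> A i) -> g != v -> le u g.
  move=> g Hg Hsg ne.
  case/orP: (le_total ho g u) => [gu|//].
  case: (eqVneq g u) => [->|gnu]; first exact: le_refl.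
  by exfalso; apply: Hno; exists g; split=> //; rewrite /mlt gu gnu.
have [gv gvg gvv] := Hv.1.
have [gu gug guu] := Hu.1.
have Hc : forall i, u i = 0 \/ v i = 0.
  by move=> i; move/forallP: Hcop => /(_ i) /eqP; lia.
have contr : forall k : 'I_n, (forall i, v i <= nat_of_bool (i == k)) -> False.
  move=> k Hk; apply: (Hnv k); exists gv => //; apply: mdiv_trans gvv _.
  by apply/mdivP => i; rewrite ffunE; apply: Hk.
case: s Hs LQ => // t _ LQ.
pose vs := vpow t.+1 v; pose uv := mmul u (vpow t v).
have vleu := mlt_le vu.
have Hvsuv : mlt le vs uv.
  by rewrite /vs vpowS /uv; apply: mlt_mulr.
have uvI : mideal_pow gens t.+1 uv.
  exists (gu :: nseq t gv); split; first by rewrite /= size_nseq.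
    by rewrite /= gug all_nseq /= gvg orbT.
  by rewrite /uv /=; apply: mdiv_mul2 => //; apply: vpow_mdiv.
have [U [Udiv HU]] := mingen_exists uvI.
have [us [Hus1 Hus2 HUe]] := mingen_pow HU.
have suppuv : forall i, msupp uv i -> A i.
  move=> i; rewrite /A /msupp /uv mmulE vpowE /= => Hi.
  case: (posnP (v i)) => [E|P]; last by apply/orP; right.
  by move: Hi; rewrite E muln0 addn0 => ->.
have suppU := supp_div Udiv suppuv.
have Uleuv := mdiv_le ho Udiv.
have [k0 Hk0] : exists k : 'I_n, v k <> u k.
  apply: NNPP => Hn; case/andP: vu => _ /eqP; apply; apply/ffunP => i.
  by apply: NNPP => Hi; apply: Hn; exists i.
case: (keyL ho vu H Hus2 (ltac:(by rewrite -HUe))) => [|[_]]; rewrite Hus1 /= -HUe.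
  move=> Hd; have /mdivP Hd2 := mdiv_trans Hd Udiv.
  apply: (contr k0) => i; move: (Hd2 i) (Hc i); rewrite /uv mmulE !vpowE mulSn.
  move=> H1 H2; have -> : v i = 0 by exact: arith2 H1 H2.
  done.
move=> uvU.
have vsU : mlt le vs U := mlt_le_trans ho Hvsuv uvU.
have vsmin : mingen (mideal_pow gens t.+1) vs.
  split.
    exists (nseq t.+1 gv); split; first by rewrite size_nseq.
      by apply/allP => x; rewrite mem_nseq => /andP[_ /eqP ->].
    exact: vpow_mdiv.
  move=> d dvs [gs [Hgs1 Hgs2 Hgs3]].
  have Pvs := mdiv_trans Hgs3 dvs.
  have suppvs : forall i, msupp vs i -> A i.
    move=> i; rewrite /A /msupp /vs vpowE /= => Hi.
    by rewrite muln_gt0 in Hi; case/andP: Hi => _ ->; rewrite orbT.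
  case: (keyL ho vu H Hgs2 (supp_div Pvs suppvs)) => [|[_]]; rewrite Hgs1 /=.
    by move=> Hd; apply: mdiv_anti dvs (mdiv_trans Hd Hgs3).
  move=> Hl; exfalso.
  have := mlt_le_trans ho Hvsuv (le_trans ho Hl (mdiv_le ho Pvs)).
  by rewrite (negbTE (mlt_irr le vs)).
have [V HV] := LQ U HU (ex_intro _ vs (conj vsmin vsU)).
pose m := [ffun i => vs i - U i].
have [k kV Hk] : exists2 k, k \in V & mdiv (mvar k) m.
  apply/(HV m).1; exists vs; split; [exact: vsmin|exact: vsU|].
  apply/mdivP => i; rewrite (mmulE m U) /m (@ffunE _ _ (fun i => vs i - U i)); move: (vs i) (U i) => a b; lia.
have [W [HW WU Wdiv]] : exists W, [/\ mingen (mideal_pow gens t.+1) W, mlt le W U &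
     mdiv W (mmul (mvar k) U)].
  by apply/(HV (mvar k)).2; exists k => //; apply: mdiv_refl.
have Hvk : 0 < v k.
  move/mdivP: Hk => /(_ k); rewrite !ffunE eqxx /vs vpowE.
  by case: (v k) => [|x]; rewrite ?muln0.
have suppxU : forall i, msupp (mmul (mvar k) U) i -> A i.
  move=> i; rewrite /msupp mmulE ffunE.
  case: (eqVneq i k) => [->|_] /= Hi; first by rewrite /A /msupp Hvk orbT.
  by apply: suppU.
have [ws [Hws1 Hws2 HWe]] := mingen_pow HW.
case: (keyL ho vu H Hws2 (ltac:(by rewrite -HWe; apply: supp_div Wdiv suppxU))) => [|[_]];
  rewrite Hws1 /= -HWe.
  move=> Hd; have /mdivP Hd2 := mdiv_trans Hd Wdiv.
  move/mdivP: Udiv => Hud.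
  apply: (contr k) => i; move: (Hd2 i) (Hc i) (Hud i); rewrite vpowE mulSn (mmulE (mvar k) U) /uv (mmulE u) vpowE /mvar ffunE.
  exact: arith1.
move=> uvW; have := mlt_le_trans ho WU (le_trans ho Uleuv uvW).
by rewrite (negbTE (mlt_irr le W)).
Qed.

Theorem proposition2p7 (n : nat) (gens : seq (mon n)) (s : nat)
    (le : rel (mon n)) :
  (forall k : 'I_n, ~ mideal gens (mvar k)) ->
  (1 <= s)%N ->
  monomial_order le ->
  linear_quotients (mideal_pow gens s) le ->
  exists l : seq (mon n),
    [/\ uniq l,
        (forall u, u \in l <-> mingen (mideal gens) u) &
        forall u v, u \in l -> v \in l -> (index u l < index v l)%N ->
          mcoprime u v ->
          exists w, [/\ w \in l, w != u, w != v,
                        (index u l < index w l)%N &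
                        forall i, msupp w i -> msupp u i || msupp v i]].
Proof.
move=> Hnv Hs ho LQ.
pose p := fun g : mon n => all (fun g2 => mdiv g2 g ==> (g2 == g)) gens.
pose r := fun a b : mon n => le b a.
have rtot : total r by move=> a b; rewrite /r orbC; apply: le_total.
have rtr : transitive r by move=> a b c H1 H2; rewrite /r in H1 H2 *; exact: (le_trans ho H2 H1).
pose l := sort r (undup (filter p gens)).
have meml : forall u, u \in l <-> mingen (mideal gens) u.
  move=> u; rewrite /l mem_sort mem_undup mem_filter; split.
    case/andP=> /allP Hp ug; split; first by exists u => //; apply: mdiv_refl.
    move=> d du [g gg gd]; have gu := mdiv_trans gd du.
    by move/implyP: (Hp g gg) => /(_ gu) /eqP E; subst g; apply: mdiv_anti.
  case=> [[g gg gu] Hm]; have E : g = u by apply: Hm => //; exists g => //; apply: mdiv_refl.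
  subst g; rewrite gg andbT; apply/allP => g2 g2g; apply/implyP => g2u; apply/eqP.
  by apply: Hm => //; exists g2 => //; apply: mdiv_refl.
have lsort : sorted r l by apply: sort_sorted.
exists l; split.
- by rewrite /l sort_uniq undup_uniq.
- exact: meml.
move=> u v ul vl iuv Hcop.
have vu : mlt le v u.
  apply/andP; split; first exact: (sorted_ltn_index rtr lsort u v ul vl iuv).
  by apply/eqP => E; subst v; rewrite ltnn in iuv.
have [w [Hw wu wv Hsupp]] := mainL Hnv Hs ho LQ ((meml u).1 ul) ((meml v).1 vl) vu Hcop.
have wl := (meml w).2 Hw.
exists w; split=> //.
- by case/andP: wu.
case: (ltngtP (index u l) (index w l)) => // H.
  have := sorted_ltn_index rtr lsort w u wl ul H; rewrite /r => uw.
  case/andP: wu => wu1 /eqP; case; apply: (le_anti ho).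
  by rewrite wu1 uw.
by have E := index_inj u ul wl H; subst w; move: (mlt_irr le u); rewrite wu.
Qed.
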